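(* Let $\mathcal F\subseteq\mathcal O(A)$ be a conservative clone with $\mathrm r(\mathcal F)=r\ge3$. Let $n$ be a natural number, $\mathbf a\in A^n_{<r}$, $f\in\mathcal F_{[n]}$, and $\sigma\colon A\to A$ an arbitrary function. Then $f(\sigma(\mathbf a))=\sigma(f(\mathbf a))$, where $\sigma(\mathbf a)$ is applied componentwise.
   Context: $\mathcal O(A)=\bigcup_{n<\omega}A^{A^n}$; $\mathcal F_{[n]}=\mathcal F\cap A^{A^n}$. $\mathrm{ran}\,\mathbf a$ is the set of entries of $\mathbf a\in A^n$; $A^n_{<r}=\{\mathbf a\in A^n:|\mathrm{ran}\,\mathbf a|<r\}$. A clone with carrier $A$ is a subset of $\mathcal O(A)$ containing all projections and closed under composition; it is conservative if $f(\mathbf a)\in\mathrm{ran}\,\mathbf a$ for all its members $f$ and all $\mathbf a$. $\mathrm r(\mathcal F)$ is the least $r$ such that $\mathcal F$ contains an $r$-ary function that is not a projection ($\omega$ if there is none). *)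

(* Defs.v *)
From mathcomp Require Import all_boot.
From Stdlib Require List.
Set Implicit Arguments. Unset Strict Implicit. Unset Printing Implicit Defensive.

Definition op (A : Type) (n : nat) := ('I_n -> A) -> A.

(* A set of operations F ⊆ O(A), given by its n-ary parts F_[n]. *)
Definition opset (A : Type) := forall n : nat, op A n -> Prop.

Definition proj (A : Type) (n : nat) (i : 'I_n) : op A n := fun x => x i.

Definition is_projection (A : Type) (n : nat) (f : op A n) : Prop :=
  exists i : 'I_n, forall x : 'I_n -> A, f x = x i.

Definition is_clone (A : Type) (F : opset A) : Prop :=
  (forall n (i : 'I_n), F n (@proj A n i)) /\
  (forall n m (f : op A n) (g : 'I_n -> op A m),
      F n f -> (forall i, F m (g i)) ->
      F m (fun x => f (fun i => g i x))).

Definition in_ran (A : Type) (n : nat) (a : 'I_n -> A) (y : A) : Prop :=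
  exists i : 'I_n, a i = y.

Definition conservative (A : Type) (F : opset A) : Prop :=
  forall n (f : op A n), F n f -> forall a : 'I_n -> A, in_ran a (f a).

Definition rank_eq (A : Type) (F : opset A) (r : nat) : Prop :=
  (exists f : op A r, F r f /\ ~ is_projection f) /\
  (forall m (f : op A m), m < r -> F m f -> is_projection f).

Definition ran_lt (A : Type) (n : nat) (a : 'I_n -> A) (r : nat) : Prop :=
  exists s : seq A, size s < r /\ forall i : 'I_n, List.In (a i) s.

(* Main.v *)
Require Import Defs.
From mathcomp Require Import all_boot.
From Stdlib Require Import FunctionalExtensionality ClassicalEpsilon.
From Stdlib Require List.

Lemma in_nth_ex (A : Type) (x : A) (s : seq A) :
  List.In x s -> exists j, j < size s /\ nth x s j = x.
Proof.
elim: s => [|y s IH] //= [->|H]; first by exists 0.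
have [j [Hj Hn]] := IH H; exists j.+1; split => //.
Qed.

Theorem claim1 (A : Type) (F : opset A) (r : nat)
  (HF : is_clone F) (Hcons : conservative F)
  (Hr : rank_eq F r) (Hr3 : 3 <= r)
  (n : nat) (a : 'I_n -> A) (Ha : ran_lt a r)
  (f : op A n) (Hf : F n f) (sigma : A -> A) :
  f (fun i => sigma (a i)) = sigma (f a).
Proof.
have [s [Hs Hin]] := Ha.
set t := in_tuple s.
have Hex : forall i, exists j : 'I_(size s), tnth t j = a i.
  move=> i; have [j [Hj Hn]] := @in_nth_ex _ (a i) s (Hin i).
  exists (Ordinal Hj); by rewrite (tnth_nth (a i)).
pose idx i := proj1_sig (constructive_indefinite_description _ (Hex i)).
have Hidx : forall i, tnth t (idx i) = a i.
  move=> i; exact: (proj2_sig (constructive_indefinite_description _ (Hex i))).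
pose g := fun x : 'I_(size s) -> A => f (fun i => x (idx i)).
have Fg : F (size s) g.
  exact: (HF.2 n (size s) f (fun i => proj (idx i)) Hf (fun i => HF.1 _ (idx i))).
have [j Hj] := Hr.2 _ g Hs Fg.
have E1 : f a = g (fun j => tnth t j).
  rewrite /g; f_equal; apply: functional_extensionality => i; by rewrite Hidx.
have E2 : f (fun i => sigma (a i)) = g (fun j => sigma (tnth t j)).
  rewrite /g; f_equal; apply: functional_extensionality => i; by rewrite Hidx.
by rewrite E1 E2 !Hj.
Qed.
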